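(* Let $A=\langle Q,\delta,\gamma,F\rangle$ be a finitely supported and well-nested pomset automaton, and let $q\in Q$ be recursive. Then $$L_A(q)=\Bigl(\bigcup_{r\in Q:\ \gamma(q,r,q)=\top} L_A(r)\Bigr)^{\dagger}.$$
   Context: Fix a finite alphabet $\Sigma$; pomsets are isomorphism classes of $\Sigma$-labelled posets, $1$ the empty pomset, $a\in\Sigma$ the one-point pomset, $\cdot,\parallel$ sequential/parallel composition, $\mathsf{Pom}^{\mathsf{sp}}$ the smallest set containing $1$ and all $a$ closed under both. For a pomset language $\mathcal U$, $\mathcal U^\dagger=\bigcup_{n}\mathcal U^{(n)}$ with $\mathcal U^{(0)}=\{1\}$ and $\mathcal U^{(n+1)}=\{U\parallel V: U\in\mathcal U, V\in\mathcal U^{(n)}\}$. A PA is $A=\langle Q,\delta,\gamma,F\rangle$ with $F\subseteq Q$, $\delta:Q\times\Sigma\to Q$, $\gamma:Q^3\to Q$, with states $\bot\notin F$, $\top\in F$ such that $\delta(\bot,a)=\delta(\top,a)=\bot$, $\gamma(\bot,r,s)=\gamma(\top,r,s)=\bot$. Traces: the smallest relation with $q\xrightarrow{1}_A q$; $q\xrightarrow{a}_A\delta(q,a)$; $q\xrightarrow{U}_A q''\xrightarrow{V}_A q'$ implies $q\xrightarrow{U\cdot V}_A q'$; $r\xrightarrow{U}_A r'\in F$, $s\xrightarrow{V}_A s'\in F$ imply $q\xrightarrow{U\parallel V}_A\gamma(q,r,s)$. $L_A(q)=\{U:\exists q'\in F.\ q\xrightarrow{U}_A q'\}$. $\preceq_A$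 is the smallest preorder on $Q$ with $r,s\preceq_A q$ when $\gamma(q,r,s)\neq\bot$, $\delta(q,a)\preceq_A q$, and $\gamma(q,r,s)\preceq_A q$; $q\prec_A q'$ iff $q\preceq_A q'$ and $q'\not\preceq_A q$. $\pi_A(q)$ is the smallest $\preceq_A$-downward-closed set containing $q$; $A$ is finitely supported if all $\pi_A(q)$ are finite. A state $q$ is sequential if $\gamma(q,r,s)\neq\bot$ implies $r,s\prec_A q$. A state $q\in F$ is recursive if it is not sequential, $\delta(q,a)=\bot$ for all $a\in\Sigma$, and whenever $\gamma(q,r,s)\neq\bot$ we have $s=q$, $r\prec_A q$ and $\gamma(q,r,s)=\top$. $A$ is well-nested if every state is sequential or recursive. *)

(* Defs.v *)
From Stdlib Require Import List.
From mathcomp Require Import all_boot.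

Unset Implicit Arguments.
Unset Strict Implicit.
Unset Printing Implicit Defensive.

(* Pomsets are isomorphism classes of these; a pomset language
   is represented by a predicate on lposets, and all languages below are
   closed under isomorphism by construction. *)
Record lposet (Sigma : Type) := LPoset {
  lp_car : nat;
  lp_ord : rel 'I_lp_car;
  lp_lab : 'I_lp_car -> Sigma
}.
Arguments lp_ord {Sigma} l _ _.
Arguments lp_lab {Sigma} l _.
Arguments lp_car {Sigma} l.

Section Pomsets.
Variable Sigma : Type.

Definition lp_iso (U V : lposet Sigma) : Prop :=
  exists f : 'I_(lp_car U) -> 'I_(lp_car V),
    bijective f /\
    (forall i j, lp_ord V (f i) (f j) = lp_ord U i j) /\
    (forall i, lp_lab V (f i) = lp_lab U i).

Definition pom_one : lposet Sigma :=
  @LPoset Sigma 0 (fun _ _ => true) (fun i => match (ltn_ord i : false = true) with end).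

Definition pom_atom (a : Sigma) : lposet Sigma :=
  @LPoset Sigma 1 (fun _ _ => true) (fun _ => a).

Definition sum_lab (U V : lposet Sigma) (i : 'I_(lp_car U + lp_car V)) : Sigma :=
  match split i with inl i' => lp_lab U i' | inr j' => lp_lab V j' end.

Definition seq_ord (U V : lposet Sigma) : rel 'I_(lp_car U + lp_car V) :=
  fun i j => match split i, split j with
  | inl i', inl j' => lp_ord U i' j'
  | inr i', inr j' => lp_ord V i' j'
  | inl _, inr _ => true
  | inr _, inl _ => false
  end.

Definition pom_seq (U V : lposet Sigma) : lposet Sigma :=
  @LPoset Sigma (lp_car U + lp_car V) (seq_ord U V) (sum_lab U V).

Definition par_ord (U V : lposet Sigma) : rel 'I_(lp_car U + lp_car V) :=
  fun i j => match split i, split j with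
  | inl i', inl j' => lp_ord U i' j'
  | inr i', inr j' => lp_ord V i' j'
  | _, _ => false
  end.

Definition pom_par (U V : lposet Sigma) : lposet Sigma :=
  @LPoset Sigma (lp_car U + lp_car V) (par_ord U V) (sum_lab U V).

Fixpoint par_pow (L : lposet Sigma -> Prop) (n : nat) (U : lposet Sigma) : Prop :=
  match n with
  | 0 => lp_iso pom_one U
  | n'.+1 => exists V W, L V /\ par_pow L n' W /\ lp_iso (pom_par V W) U
  end.

Definition par_star (L : lposet Sigma -> Prop) (U : lposet Sigma) : Prop :=
  exists n, par_pow L n U.

End Pomsets.
Arguments lp_iso {Sigma} U V.
Arguments pom_atom {Sigma} a.
Arguments pom_seq {Sigma} U V.
Arguments pom_par {Sigma} U V.
Arguments par_pow {Sigma} L n U.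
Arguments par_star {Sigma} L U.

Record PA (Sigma : Type) (Q : Type) := MkPA {
  pa_fin : Q -> Prop;
  pa_delta : Q -> Sigma -> Q;
  pa_gamma : Q -> Q -> Q -> Q;
  pa_bot : Q;
  pa_top : Q;
  pa_bot_nfin : ~ pa_fin pa_bot;
  pa_top_fin : pa_fin pa_top;
  pa_delta_bot : forall a, pa_delta pa_bot a = pa_bot;
  pa_delta_top : forall a, pa_delta pa_top a = pa_bot;
  pa_gamma_bot : forall r s, pa_gamma pa_bot r s = pa_bot;
  pa_gamma_top : forall r s, pa_gamma pa_top r s = pa_bot
}.
Arguments pa_fin {Sigma Q} p _.
Arguments pa_delta {Sigma Q} p _ _.
Arguments pa_gamma {Sigma Q} p _ _ _.
Arguments pa_bot {Sigma Q} p.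
Arguments pa_top {Sigma Q} p.

Section Automata.
Variables (Sigma : Type) (Q : Type) (A : PA Sigma Q).

Local Notation F := (pa_fin A).
Local Notation delta := (pa_delta A).
Local Notation gamma := (pa_gamma A).
Local Notation bot := (pa_bot A).
Local Notation top := (pa_top A).

Inductive trace : Q -> lposet Sigma -> Q -> Prop :=
  | tr_one q : trace q (pom_one Sigma) q
  | tr_atom q a : trace q (pom_atom a) (delta q a)
  | tr_seq q q'' q' U V : trace q U q'' -> trace q'' V q' -> trace q (pom_seq U V) q'
  | tr_par q r r' s s' U V :
      trace r U r' -> F r' -> trace s V s' -> F s' ->
      trace q (pom_par U V) (gamma q r s)
  | tr_iso q q' U V : trace q U q' -> lp_iso U V -> trace q V q'.

Definition lang (q : Q) (U : lposet Sigma) : Prop :=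
  exists q', F q' /\ trace q U q'.

Inductive preceq : Q -> Q -> Prop :=
  | pre_refl q : preceq q q
  | pre_trans q1 q2 q3 : preceq q1 q2 -> preceq q2 q3 -> preceq q1 q3
  | pre_gam_l q r s : gamma q r s <> bot -> preceq r q
  | pre_gam_r q r s : gamma q r s <> bot -> preceq s q
  | pre_delta q a : preceq (delta q a) q
  | pre_gamma q r s : preceq (gamma q r s) q.

Definition prec (q q' : Q) : Prop := preceq q q' /\ ~ preceq q' q.

Inductive pi (q : Q) : Q -> Prop :=
  | pi_self : pi q q
  | pi_down q1 q2 : pi q q2 -> preceq q1 q2 -> pi q q1.

Definition finitely_supported : Prop :=
  forall q, exists s : list Q, forall x, pi q x -> In x s.

Definition sequential (q : Q) : Prop :=
  forall r s, gamma q r s <> bot -> prec r q /\ prec s q.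

Definition recursive (q : Q) : Prop :=
  F q /\ ~ sequential q /\ (forall a, delta q a = bot) /\
  (forall r s, gamma q r s <> bot -> s = q /\ prec r q /\ gamma q r s = top).

Definition well_nested : Prop := forall q, sequential q \/ recursive q.

End Automata.
Arguments trace {Sigma Q} A _ _ _.
Arguments lang {Sigma Q} A q U.
Arguments preceq {Sigma Q} A _ _.
Arguments prec {Sigma Q} A q q'.
Arguments pi {Sigma Q} A q _.
Arguments finitely_supported {Sigma Q} A.
Arguments sequential {Sigma Q} A q.
Arguments recursive {Sigma Q} A q.
Arguments well_nested {Sigma Q} A.

(* Main.v *)
Require Import Defs.
From mathcomp Require Import all_boot.
From Stdlib Require Import Classical.

Set Implicit Arguments.
Section Iso.
Variable Sigma : Type.
Implicit Types U V W : lposet Sigma.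

Lemma iso_refl U : lp_iso U U.
Proof. exists id; split; first by exists id. by split. Qed.

Lemma iso_sym U V : lp_iso U V -> lp_iso V U.
Proof.
case=> f [[g fg gf] [Ho Hl]]; exists g; split; first by exists f.
split=> [i j|i]; first by rewrite -Ho !gf.
by rewrite -Hl gf.
Qed.

Lemma iso_trans U V W : lp_iso U V -> lp_iso V W -> lp_iso U W.
Proof.
case=> f [[g fg gf] [Ho Hl]]; case=> f' [[g' fg' gf'] [Ho' Hl']].
exists (f' \o f); split; first by exists (g \o g') => x /=; rewrite ?fg' ?fg ?gf ?gf'.
by split=> [i j|i] /=; rewrite ?Ho' ?Ho ?Hl' ?Hl.
Qed.

Lemma iso_seq_cong U U' V V' : lp_iso U U' -> lp_iso V V' ->
  lp_iso (pom_seq U V) (pom_seq U' V').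
Proof.
case=> f [[g fg gf] [Ho Hl]]; case=> f' [[g' fg' gf'] [Ho' Hl']].
pose F (i : 'I_(lp_car U + lp_car V)) : 'I_(lp_car U' + lp_car V') :=
  unsplit (match split i with inl x => inl (f x) | inr y => inr (f' y) end).
pose G (i : 'I_(lp_car U' + lp_car V')) : 'I_(lp_car U + lp_car V) :=
  unsplit (match split i with inl x => inl (g x) | inr y => inr (g' y) end).
exists F; split.
  exists G => i; rewrite /F /G.
    case E: (split i) => [x|y]; rewrite unsplitK ?fg ?fg' -E; exact: splitK.
  case E: (split i) => [x|y]; rewrite unsplitK ?gf ?gf' -E; exact: splitK.
split=> [i j|i] /=; rewrite /seq_ord /sum_lab /F.
  by case: (split i) => x; case: (split j) => y; rewrite !unsplitK.
by case: (split i) => x; rewrite unsplitK.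
Qed.

Lemma iso_one_seq V : lp_iso (pom_seq (pom_one Sigma) V) V.
Proof.
apply: iso_sym.
exists (fun j : 'I_(lp_car V) => @rshift 0 _ j); split.
  exists (fun i : 'I_(0 + lp_car V) =>
     match split i with inl x => match (ltn_ord x : false = true) with end
                      | inr y => y end) => i.
    by rewrite (unsplitK (inr i : 'I_0 + _)).
  case E: (split i) => [x|y]; first by have := ltn_ord x; rewrite ltn0.
  by rewrite -[i]splitK E.
by split=> [i j|i]; rewrite /= /seq_ord /sum_lab
  ?(unsplitK (inr i : 'I_0 + _)) ?(unsplitK (inr j : 'I_0 + _)).
Qed.

Lemma iso_seq_one U : lp_iso (pom_seq U (pom_one Sigma)) U.
Proof.
apply: iso_sym.
exists (fun j : 'I_(lp_car U) => @lshift _ 0 j); split.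
  exists (fun i : 'I_(lp_car U + 0) =>
     match split i with inr x => match (ltn_ord x : false = true) with end
                      | inl y => y end) => i.
    by rewrite (unsplitK (inl i : _ + 'I_0)).
  case E: (split i) => [y|x]; last by have := ltn_ord x; rewrite ltn0.
  by rewrite -[i]splitK E.
by split=> [i j|i]; rewrite /= /seq_ord /sum_lab
  ?(unsplitK (inl i : _ + 'I_0)) ?(unsplitK (inl j : _ + 'I_0)).
Qed.

Lemma par_pow_iso L n U V : par_pow L n U -> lp_iso U V -> par_pow L n V.
Proof.
case: n => [|n] /=; first exact: iso_trans.
case=> X [Y [HX [HY HI]]] HUV; exists X, Y; split=> //; split=> //.
exact: iso_trans HUV.
Qed.

Lemma par_star_iso L U V : par_star L U -> lp_iso U V -> par_star L V.
Proof. case=> n H HUV; exists n; exact: par_pow_iso HUV. Qed.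

End Iso.

Section Main.
Variables (Sigma : Type) (Q : Type) (A : PA Sigma Q) (q : Q).
Hypothesis Hrec : recursive A q.
Let L := fun V => exists r : Q, pa_gamma A q r q = pa_top A /\ lang A r V.

Lemma inv q0 U q' : trace A q0 U q' ->
 (q0 = q -> (q' = q /\ lp_iso (pom_one Sigma) U) \/ (q' = pa_top A /\ par_star L U)
            \/ q' = pa_bot A) /\
 (q0 = pa_top A -> (q' = pa_top A /\ lp_iso (pom_one Sigma) U) \/ q' = pa_bot A) /\
 (q0 = pa_bot A -> q' = pa_bot A).
Proof.
case: Hrec => Fq [_ [Hd Hg]].
elim=> {q0 U q'}.
- move=> q0; split; [|split] => ->; auto using iso_refl.
- move=> q0 a; split; [|split] => ->; rewrite ?Hd ?pa_delta_top ?pa_delta_bot; auto.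
- move=> q0 q'' q' U V _ [IU1 [IU2 IU3]] _ [IV1 [IV2 IV3]].
  split; [|split] => E.
  + case: (IU1 E) => [[E1 HU]|[[E1 HU]|E1]]; rewrite E1 in IV1 IV2 IV3.
    * have C : lp_iso (pom_seq U V) V.
        exact: iso_trans (iso_seq_cong (iso_sym HU) (iso_refl V)) (iso_one_seq V).
      case: (IV1 erefl) => [[-> HV]|[[-> HV]|->]]; auto.
      - left; split=> //; exact: iso_trans HV (iso_sym C).
      - right; left; split=> //; exact: par_star_iso HV (iso_sym C).
    * case: (IV2 erefl) => [[-> HV]|->]; auto.
      have C : lp_iso (pom_seq U V) U.
        exact: iso_trans (iso_seq_cong (iso_refl U) (iso_sym HV)) (iso_seq_one U).
      right; left; split=> //; exact: par_star_iso HU (iso_sym C).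
    * auto.
  + case: (IU2 E) => [[E1 HU]|E1]; rewrite E1 in IV1 IV2 IV3; last by auto.
    case: (IV2 erefl) => [[-> HV]|->]; auto.
    have C : lp_iso (pom_seq U V) V.
      exact: iso_trans (iso_seq_cong (iso_sym HU) (iso_refl V)) (iso_one_seq V).
    left; split=> //; exact: iso_trans HV (iso_sym C).
  + by apply: IV3; apply: IU3.
- move=> q0 r r' s s' U V HU _ Fr' _ [IV1 _] Fs'.
  split; [|split] => ->; rewrite ?pa_gamma_top ?pa_gamma_bot; auto.
  case: (classic (pa_gamma A q r s = pa_bot A)) => Hb; first by auto.
  case: (Hg _ _ Hb) => Es [_ Et]; subst s.
  right; left; split=> //.
  have [n Hn] : par_star L V.
    case: (IV1 erefl) => [[_ HV]|[[_ HV]|Eb]] => //.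
    - by exists 0.
    - by rewrite Eb in Fs'; case: (pa_bot_nfin _ _ A).
  exists n.+1; exists U, V; split; last by split=> //; apply: iso_refl.
  by exists r; split=> //; exists r'.
- move=> q0 q' U V _ [I1 [I2 I3]] HUV; split; [|split] => E.
  + case: (I1 E) => [[-> H]|[[-> H]|->]]; auto.
    * left; split=> //; exact: iso_trans HUV.
    * right; left; split=> //; exact: par_star_iso HUV.
  + case: (I2 E) => [[-> H]|->]; auto.
    left; split=> //; exact: iso_trans HUV.
  + exact: I3.
Qed.

End Main.

Theorem mainTheorem10 (Sigma : finType) (Q : Type) (A : PA Sigma Q) (q : Q) :
  finitely_supported A -> well_nested A -> recursive A q ->
  forall U : lposet Sigma,
    lang A q U <->
    par_star (fun V => exists r : Q, pa_gamma A q r q = pa_top A /\ lang A r V) U.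
Proof.
move=> _ _ Hrec U; split.
  case=> q' [Fq' Htr].
  case: (inv Hrec Htr) => [I1 _].
  case: (I1 erefl) => [[_ H]|[[_ H]|Eb]] => //.
    by exists 0.
  by rewrite Eb in Fq'; case: (pa_bot_nfin _ _ A).
case: Hrec => Fq _ [n Hn].
elim: n U Hn => [|n IH] U /=.
  by move=> H; exists q; split=> //; apply: tr_iso H; apply: tr_one.
case=> V [W [[r [Hr [r' [Fr' Tr]]]] [HW HI]]].
case: (IH W HW) => q'' [Fq'' Tw].
exists (pa_top A); split; first exact: pa_top_fin.
apply: tr_iso HI; rewrite -Hr; exact: tr_par Tr Fr' Tw Fq''.
Qed.
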